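(* Let $Y\in\mathbb{R}^{M\times I}$ and $X\in\mathbb{R}^{N\times I}$ be nonnegative output and input data of $I$ DMUs, fix a DMU $\hat\imath$, an output index $m$, and $\sigma\ge0$, and let $\theta^{\hat\imath}$ be the nominal efficiency score of DMU $\hat\imath$. Let $\bar Y$ equal $Y$ except that the single entry $Y_{m\hat\imath}$ is replaced by $Y_{m\hat\imath}+\Delta_{m\hat\imath}$ (assumed nonnegative), and let $\gamma$ be the efficiency score of DMU $\hat\imath$ computed from $(\bar Y,X)$. If $\Delta_{m\hat\imath}=\sigma$ then $\gamma\ge\theta^{\hat\imath}$; if $\Delta_{m\hat\imath}=-\sigma$ then $\gamma\le\theta^{\hat\imath}$.
   Context: Input-oriented BCC DEA: the efficiency score of DMU $k$ with data $(X,Y)$ is $\min\{\theta: Y\lambda\ge y^k,\ X\lambda\le\theta x^k,\ e^T\lambda=1,\ \lambda\ge0\}$, where $y^k,x^k$ are the $k$-th columns and $e$ is the all-ones vector; the perturbed entry appears both in the $\hat\imath$-th column of $\bar Y$ and in the right-hand side $\bar y^{\hat\imath}$. *)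

(* Defs.v *)
From HB Require Import structures.
From mathcomp Require Import all_boot all_order all_algebra.
From mathcomp Require Import all_classical all_reals ereal.
Set Implicit Arguments. Unset Strict Implicit. Unset Printing Implicit Defensive.
Import Order.TTheory GRing.Theory Num.Theory.
Local Open Scope ring_scope.
Local Open Scope classical_set_scope.

Definition bcc_feasible (R : realType) (M N I : nat)
  (Y : 'M[R]_(M, I)) (X : 'M[R]_(N, I)) (k : 'I_I) (theta : R) : Prop :=
  exists lam : 'cV[R]_I,
    [/\ (forall j, 0 <= lam j 0),
        \sum_j lam j 0 = 1,
        (forall r, Y r k <= (Y *m lam) r 0) &
        (forall n, (X *m lam) n 0 <= theta * X n k)].

Definition bcc_score (R : realType) (M N I : nat)
  (Y : 'M[R]_(M, I)) (X : 'M[R]_(N, I)) (k : 'I_I) : \bar R :=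
  ereal_inf [set (theta%:E)%E | theta in [set theta | bcc_feasible Y X k theta]].

Definition perturb_entry (R : realType) (M I : nat)
  (Y : 'M[R]_(M, I)) (m : 'I_M) (i : 'I_I) (delta : R) : 'M[R]_(M, I) :=
  \matrix_(r, j) (if (r == m) && (j == i) then Y r j + delta else Y r j).

(* Main.v *)
Require Import Defs.
From HB Require Import structures.
From mathcomp Require Import all_boot all_order all_algebra.
From mathcomp Require Import all_classical all_reals ereal.
From mathcomp Require Import lra.
Import Order.TTheory GRing.Theory Num.Theory.
Local Open Scope ring_scope.

Lemma score_mono (R : realType) (M N I : nat)
  (Y1 Y2 : 'M[R]_(M, I)) (X : 'M[R]_(N, I)) (k : 'I_I) :
  (forall t, bcc_feasible Y1 X k t -> bcc_feasible Y2 X k t) ->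
  (bcc_score Y2 X k <= bcc_score Y1 X k)%E.
Proof.
move=> H; apply: le_ereal_inf => _ [t Ht <-]; exists t => //; exact: H.
Qed.

Lemma perturb_mul (R : realType) (M I : nat)
  (Y : 'M[R]_(M, I)) (m : 'I_M) (i : 'I_I) (delta : R) (lam : 'cV[R]_I) r :
  (perturb_entry Y m i delta *m lam) r 0 =
  (Y *m lam) r 0 + (if r == m then delta * lam i 0 else 0).
Proof.
rewrite !mxE.
under eq_bigr => j _ do rewrite mxE.
have -> : \sum_j (if (r == m) && (j == i) then Y r j + delta else Y r j) * lam j 0
  = \sum_j (Y r j * lam j 0 + (if (r == m) && (j == i) then delta * lam j 0 else 0)).
  by apply: eq_bigr => j _; case: ifP => _; rewrite ?mulrDl ?addr0.
rewrite big_split /=; congr (_ + _).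
case: (r == m) => /=; last by rewrite big1.
rewrite (bigD1 i) //= eqxx big1 ?addr0 // => j /negbTE ->; done.
Qed.

Lemma lam_le1 (R : realType) (I : nat) (lam : 'cV[R]_I) (i : 'I_I) :
  (forall j, 0 <= lam j 0) -> \sum_j lam j 0 = 1 -> lam i 0 <= 1.
Proof.
move=> H0 H1; rewrite -H1 (bigD1 i) //= lerDl; apply: sumr_ge0 => j _; exact: H0.
Qed.

Theorem lemma5 (R : realType) (M N I : nat)
  (Y : 'M[R]_(M, I)) (X : 'M[R]_(N, I)) (ih : 'I_I) (m : 'I_M)
  (sigma delta : R) :
  (forall r j, 0 <= Y r j) -> (forall n j, 0 <= X n j) ->
  0 <= sigma ->
  0 <= Y m ih + delta ->
  (delta = sigma ->
     (bcc_score Y X ih <= bcc_score (perturb_entry Y m ih delta) X ih)%E) /\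
  (delta = - sigma ->
     (bcc_score (perturb_entry Y m ih delta) X ih <= bcc_score Y X ih)%E).
Proof.
move=> _ _ hs _; split => hd; apply: score_mono => t [lam [H0 H1 HY HX]];
  exists lam; split => // r; move: (HY r); rewrite perturb_mul;
  have hl := @lam_le1 _ _ lam ih H0 H1;
  rewrite /perturb_entry !mxE eqxx andbT; case: eqP => [->|_]; rewrite ?addr0 //;
  rewrite hd => h.
- have : sigma * lam ih 0 <= sigma by rewrite ler_piMr.
  move: h; set a := Y m ih; set b := (Y *m lam) m 0; set c := sigma * lam ih 0.
  move=> h1 h2; lra.
- have : sigma * lam ih 0 <= sigma by rewrite ler_piMr.
  move: h; set a := Y m ih; set b := (Y *m lam) m 0; set c := sigma * lam ih 0.
  rewrite mulNr -/c => h1 h2; lra.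
Qed.
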